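(* Let $(J,\mathcal F)$ and $w^S_j>0$ be as in the context, and assume $w^S_j\le w^T_j$ whenever $j\in S\subset T$ with $S,T\in\mathcal F$. Let $\mathbf c$ be $\mathcal F$-admissible and let $\mathrm{AG}_2$ on input $\mathbf c$ produce $\boldsymbol\pi$, $\boldsymbol\nu$, $S_k$, $\nu^{S_k}_j$. Then for every $j\in J$, $$\nu_j=\max\{\nu^S_j: j\in S\in\{S_1,\dots,S_n\}\}.$$
   Context: $J$ finite, $|J|=n$; $\mathcal F\subseteq2^J$ with $\emptyset\in\mathcal F$, each nonempty $S\in\mathcal F$ having nonempty $\partial^-S=\{j\in S:S\setminus\{j\}\in\mathcal F\}$, each $S\in\mathcal F\ne J$ having $j\notin S$ with $S\cup\{j\}\in\mathcal F$. Coefficients $w^S_j>0$ for $j\in S\in\mathcal F$. $\mathrm{AG}_2$ on input $\mathbf c$: $S_1=J$, $\nu^{S_1}_j=c_j/w^{S_1}_j$, $\pi_1\in\arg\min\{\nu^{S_1}_j:j\in\partial^-S_1\}$, $\nu_{\pi_1}=\nu^{S_1}_{\pi_1}$; for $k=2..n$: $S_k=S_{k-1}\setminus\{\pi_{k-1}\}$, $\nu^{S_k}_j=\nu^{S_{k-1}}_j+(w^{S_{k-1}}_j/w^{S_k}_j-1)[\nu^{S_{k-1}}_j-\nu^{S_{k-1}}_{\pi_{k-1}}]$ ($j\in S_k$), $\pi_k\in\arg\min\{\nu^{S_k}_j:j\in\partial^-S_k\}$, $\nu_{\pi_k}=\nu^{S_k}_{\pi_k}$. $\mathbf c$ is $\mathcal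 F$-admissible if $\nu_{\pi_1}\le\cdots\le\nu_{\pi_n}$. *)

(* Defs.v *)
From mathcomp Require Import all_boot all_order all_algebra.
Set Implicit Arguments. Unset Strict Implicit. Unset Printing Implicit Defensive.
Import Order.TTheory GRing.Theory Num.Theory.
Local Open Scope ring_scope.

Section AG2.
Variables (R : realFieldType) (J : finType).

Definition set_system_ok (F : {set {set J}}) : Prop :=
  [/\ set0 \in F,
      (forall S, S \in F -> S != set0 -> exists2 j, j \in S & S :\ j \in F)
    & (forall S, S \in F -> S != setT -> exists2 j, j \notin S & j |: S \in F)].

Definition lower_boundary (F : {set {set J}}) (S : {set J}) : {set J} :=
  [set j in S | S :\ j \in F].

(* S_k of AG_2, 0-indexed: AG2_S pi 0 = J = S_1, AG2_S pi k = S_{k+1};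
   pi k is \pi_{k+1}. *)
Fixpoint AG2_S (pi : nat -> J) (k : nat) : {set J} :=
  match k with
  | 0 => setT
  | k'.+1 => AG2_S pi k' :\ pi k'
  end.

(* AG2_nu w c pi k j = \nu^{S_{k+1}}_j (0-indexed). *)
Fixpoint AG2_nu (w : {set J} -> J -> R) (c : J -> R) (pi : nat -> J)
    (k : nat) (j : J) : R :=
  match k with
  | 0 => c j / w setT j
  | k'.+1 =>
      AG2_nu w c pi k' j
      + (w (AG2_S pi k') j / w (AG2_S pi k) j - 1)
        * (AG2_nu w c pi k' j - AG2_nu w c pi k' (pi k'))
  end.

Definition AG2_run (F : {set {set J}}) (w : {set J} -> J -> R) (c : J -> R)
    (pi : nat -> J) : Prop :=
  forall k, (k < #|J|)%N ->
    pi k \in lower_boundary F (AG2_S pi k) /\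
    (forall j, j \in lower_boundary F (AG2_S pi k) ->
       AG2_nu w c pi k (pi k) <= AG2_nu w c pi k j).

Definition AG2_nu_out w c pi (k : nat) : R := AG2_nu w c pi k (pi k).

Definition admissible w c pi : Prop :=
  forall k, (k.+1 < #|J|)%N -> AG2_nu_out w c pi k <= AG2_nu_out w c pi k.+1.

End AG2.

(* Main.v *)
Require Import Defs.
From mathcomp Require Import all_boot all_order all_algebra.
Import Order.TTheory GRing.Theory Num.Theory.
Local Open Scope ring_scope.

Lemma setT_inF (J : finType) (F : {set {set J}}) :
  set_system_ok F -> setT \in F.
Proof.
case=> F0 _ Fadd.
case: (arg_maxnP (fun S : {set J} => #|S|) F0) => S SF Smax.
case: (eqVneq S setT) => [<- //|ST].
have [j jS jSF] := Fadd S SF ST.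
have := Smax _ jSF; by rewrite cardsU1 jS add1n /= ltnn.
Qed.

Lemma S_decr (J : finType) (pi : nat -> J) a b : (a <= b)%N ->
  AG2_S pi b \subset AG2_S pi a.
Proof.
elim: b => [|b IH]; first by rewrite leqn0 => /eqP ->.
rewrite leq_eqVlt => /orP [/eqP ->|]; first exact: subxx.
rewrite ltnS => /IH; apply: subset_trans => /=; exact: subD1set.
Qed.

Theorem theorem4 (R : realFieldType) (J : finType) (F : {set {set J}})
    (w : {set J} -> J -> R) (c : J -> R) (pi : nat -> J) :
  set_system_ok F ->
  (forall S j, S \in F -> j \in S -> 0 < w S j) ->
  (forall S T j, S \in F -> T \in F -> S \subset T -> j \in S ->
     w S j <= w T j) ->
  AG2_run F w c pi ->
  admissible w c pi ->
  forall (j : J) (k : nat), (k < #|J|)%N -> pi k = j ->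
    j \in AG2_S pi k /\
    (forall k', (k' < #|J|)%N -> j \in AG2_S pi k' ->
       AG2_nu w c pi k' j <= AG2_nu_out w c pi k).
Proof.
move=> Fok wpos wmono run adm j k kJ pij.
have inS : forall m, (m < #|J|)%N -> pi m \in AG2_S pi m.
  by move=> m /run [] ; rewrite inE => /andP [].
have inF : forall m, (m <= #|J|)%N -> AG2_S pi m \in F.
  elim=> [|m IH] Hm; first exact: setT_inF.
  have mJ : (m < #|J|)%N by [].
  by case: (run m mJ); rewrite inE => /andP [].
have jSk : j \in AG2_S pi k by rewrite -pij; exact: inS.
split => //.
have jSm : forall m, (m <= k)%N -> j \in AG2_S pi m.
  by move=> m mk; exact: (subsetP (@S_decr _ pi _ _ mk) _ jSk).
have a_ge0 : forall m, (m < k)%N ->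
    0 <= w (AG2_S pi m) j / w (AG2_S pi m.+1) j - 1.
  move=> m mk.
  have F1 : AG2_S pi m.+1 \in F by apply: inF; exact: leq_trans mk (ltnW kJ).
  have F0 : AG2_S pi m \in F by apply: inF; exact: ltnW (leq_trans mk (ltnW kJ)).
  have j1 : j \in AG2_S pi m.+1 by apply: jSm.
  have wp := wpos _ _ F1 j1.
  have wl := wmono _ _ j F1 F0 (subD1set _ _) j1.
  rewrite subr_ge0 ler_pdivlMr // mul1r //.
set nu := AG2_nu w c pi.
set out := AG2_nu_out w c pi.
have step : forall m, nu m.+1 j = nu m j +
    (w (AG2_S pi m) j / w (AG2_S pi m.+1) j - 1) * (nu m j - out m) by [].
have key : forall d m, (m + d = k)%N -> nu m j < out m -> nu k j < out k.
  elim=> [|d IH] m; first by rewrite addn0 => ->.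
  move=> mdk lt; apply: (IH m.+1); first by rewrite addSnnS.
  have mk : (m < k)%N by rewrite -mdk addnS ltnS leq_addr.
  rewrite step.
  have h1 : (w (AG2_S pi m) j / w (AG2_S pi m.+1) j - 1) * (nu m j - out m) <= 0.
    apply: mulr_ge0_le0; first exact: a_ge0.
    by rewrite subr_le0 ltW.
  apply: (le_lt_trans (y := nu m j)); first by rewrite -[leRHS]addr0 lerD2l.
  apply: (lt_le_trans lt); apply: adm; exact: leq_ltn_trans kJ.
have G : forall m, (m <= k)%N -> out m <= nu m j.
  move=> m mk; rewrite leNgt; apply/negP => /(key (k - m)%N m).
  by rewrite subnKC // /out /AG2_nu_out pij ltxx => /(_ erefl).
have mono : forall d m, (m + d = k)%N -> nu m j <= nu k j.
  elim=> [|d IH] m; first by rewrite addn0 => ->.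
  move=> mdk; apply: le_trans (IH m.+1 _); last by rewrite addSnnS.
  have mk : (m < k)%N by rewrite -mdk addnS ltnS leq_addr.
  rewrite step -[leLHS]addr0 lerD2l; apply: mulr_ge0; first exact: a_ge0.
  by rewrite subr_ge0 G // ltnW.
move=> k' k'J jk'.
have k'k : (k' <= k)%N.
  rewrite leqNgt; apply/negP => kk'.
  have := subsetP (@S_decr _ pi _ _ kk') j jk'.
  by rewrite /= -pij !inE eqxx.
have := mono (k - k')%N k' (subnKC k'k).
by rewrite /out /AG2_nu_out pij.
Qed.
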